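(* If $m>n\ge 1$ are natural numbers, then $\mathrm{Log}_{>1}(\mathbb{R}^n)\not\subseteq \mathrm{Log}_{>1}(\mathbb{R}^m)$. Consequently, the logics $\mathrm{Log}_{>1}(\mathbb{R}^n)$, $n\ge 1$, are pairwise distinct.
   Context: Modal formulas are built from a countable set of propositional variables using $\bot$, $\to$ and one unary modality $\lozenge$. A frame is a pair $(X,R)$; a valuation assigns subsets of $X$ to variables; $x\models\lozenge\varphi$ iff there is $y$ with $xRy$ and $y\models\varphi$. A formula is valid in a frame if true at every point under every valuation. For a metric space $(X,d)$, $\mathrm{Log}_{>1}(X)$ is the set of modal formulas valid in the frame $(X,R_{>1})$, where $xR_{>1}y$ iff $d(x,y)>1$. $\mathbb{R}^n$ carries the Euclidean metric. *)

(* Defs.v *)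
From mathcomp Require Import all_boot.
From Stdlib Require Import Reals.
Open Scope R_scope.

Inductive form : Type :=
  | Var : nat -> form
  | Bot : form
  | Imp : form -> form -> form
  | Dia : form -> form.

Fixpoint sat {X : Type} (Rel : X -> X -> Prop) (V : nat -> X -> Prop)
  (x : X) (phi : form) : Prop :=
  match phi with
  | Var p => V p x
  | Bot => False
  | Imp a b => sat Rel V x a -> sat Rel V x b
  | Dia a => exists y, Rel x y /\ sat Rel V y a
  end.

Definition valid_in {X : Type} (Rel : X -> X -> Prop) (phi : form) : Prop :=
  forall (V : nat -> X -> Prop) (x : X), sat Rel V x phi.

Definition Rn (n : nat) : Type := 'I_n -> R.

Definition euclid_dist (n : nat) (x y : Rn n) : R :=
  sqrt (\big[Rplus/0]_(i < n) ((x i - y i) * (x i - y i))).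

Definition R_gt1 (n : nat) (x y : Rn n) : Prop := euclid_dist n x y > 1.

Definition Log_gt1 (n : nat) (phi : form) : Prop := valid_in (R_gt1 n) phi.

(* Main.v *)
Require Import Defs.
From mathcomp Require Import all_boot all_order all_algebra.
From Stdlib Require Import Reals Classical IndefiniteDescription.
From mathcomp Require Import Rstruct.
From mathcomp Require Import ring lra.
Import Order.TTheory GRing.Theory Num.Theory.
Local Open Scope ring_scope.

Definition D (n : nat) (x y : Rn n) : R := \sum_(i < n) (x i - y i) ^+ 2.

Lemma wcs k (P : pred 'I_k) (w y : 'I_k -> R) :
  (forall i, P i -> 0 <= w i) -> 0 < \sum_(i | P i) w i ->
  (\sum_(i | P i) w i * y i) ^+ 2 <=
  (\sum_(i | P i) w i) * \sum_(i | P i) w i * y i ^+ 2.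
Proof.
move=> w0 S0.
set S := \sum_(i | P i) w i; set T := \sum_(i | P i) w i * y i.
set Q := \sum_(i | P i) w i * y i ^+ 2.
pose mu := T / S.
have H0 : 0 <= \sum_(i | P i) w i * (y i - mu) ^+ 2.
  by apply: sumr_ge0 => i Pi; apply: mulr_ge0; [exact: w0| exact: sqr_ge0].
have E : \sum_(i | P i) w i * (y i - mu) ^+ 2 = Q - 2 * mu * T + mu ^+ 2 * S.
  rewrite (eq_bigr (fun i => w i * y i ^+ 2 + (- (2 * mu)) * (w i * y i) + mu ^+ 2 * w i)); last by move=> i _; ring.
  rewrite !big_split /= -!mulr_sumr -/Q -/T -/S; ring.
rewrite E /mu in H0.
have SS : S != 0 by rewrite gt_eqF.
have H1 : Q - 2 * (T / S) * T + (T / S) ^+ 2 * S = Q - T ^+ 2 / S by field.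
rewrite H1 subr_ge0 ler_pdivrMr // in H0.
by rewrite mulrC.
Qed.

Lemma CL n k (P : pred 'I_k) (w : 'I_k -> R) (e : 'I_k -> Rn n) (a : Rn n) :
  (forall i, P i -> 0 <= w i) -> 0 < \sum_(i | P i) w i ->
  (forall i, P i -> D n (e i) a <= 1) ->
  D n (fun j => (\sum_(i | P i) w i * e i j) / \sum_(i | P i) w i) a <= 1.
Proof.
move=> w0 S0 He.
set S := \sum_(i | P i) w i.
have SS : S != 0 by rewrite gt_eqF.
apply: (@le_trans _ _ (\sum_(j < n) (\sum_(i | P i) w i * (e i j - a j) ^+ 2) / S)).
  rewrite /D; apply: ler_sum => j _.
  have -> : (\sum_(i | P i) w i * e i j) / S - a j =
            (\sum_(i | P i) w i * (e i j - a j)) / S.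
    rewrite [in RHS](eq_bigr (fun i => w i * e i j - w i * a j)); last by move=> i _; ring.
    rewrite sumrB -mulr_suml -/S; field; exact: SS.
  rewrite expr_div_n ler_pdivrMr; last by rewrite exprn_gt0.
  have := @wcs k P w (fun i => e i j - a j) w0 S0; rewrite -/S => h.
  have -> : (\sum_(i | P i) w i * (e i j - a j) ^+ 2) / S * S ^+ 2 =
            S * \sum_(i | P i) w i * (e i j - a j) ^+ 2 by field.
  exact: h.
rewrite -mulr_suml exchange_big /= ler_pdivrMr // mul1r.
apply: ler_sum => i Pi.
rewrite -mulr_sumr; apply: ler_piMr; first exact: w0.
exact: He.
Qed.
Lemma radon n k (c : 'I_k -> Rn n) : (n.+1 < k)%nat ->
  exists lam : 'I_k -> R, (exists i, lam i != 0) /\ \sum_i lam i = 0 /\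
     forall j, \sum_i lam i * c i j = 0.
Proof.
move=> hk.
pose X : 'M[R]_(k, n) := \matrix_(i, j) c i j.
pose B := row_mx X (const_mx 1 : 'M[R]_(k, 1)).
have rk : (0 < \rank (kermx B))%nat.
  rewrite mxrank_ker subn_gt0; apply: leq_ltn_trans (rank_leq_col B) _.
  by rewrite addn1.
have : kermx B != 0 by apply: contraTneq rk => ->; rewrite mxrank0.
case/matrix0Pn => i0 [j0 nz].
have H := mulmx_ker B.
move: (kermx B) H nz => K H nz.
exists (fun l => K i0 l); split; first by exists j0.
split.
  have := congr1 (fun M : 'M[R]_(k, n + 1) => M i0 (rshift n (0 : 'I_1))) H.
  rewrite !mxE => E; apply: (etrans _ E); apply: eq_bigr => l _.
  by rewrite row_mxEr mxE mulr1.
move=> j.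
have := congr1 (fun M : 'M[R]_(k, n + 1) => M i0 (lshift 1 j)) H.
rewrite !mxE => E; apply: (etrans _ E); apply: eq_bigr => l _.
by rewrite row_mxEl mxE.
Qed.

Lemma helly n k (c : 'I_k -> Rn n) (P : nat -> Rn n -> Prop) : (n.+1 < k)%nat ->
  (forall (i : 'I_k) (l : nat), (l < k)%nat -> l != i -> forall a, P l a -> D n (c i) a <= 1) ->
  exists c0, forall l, (l < k)%nat -> forall a, P l a -> D n c0 a <= 1.
Proof.
move=> hk Hc.
have [lam [[i1 nz] [s0 sc]]] := @radon n k c hk.
pose I := fun i => 0 < lam i.
have [i0 pos] : exists i0, 0 < lam i0.
  case: (classic (exists i0, 0 < lam i0)) => // hn; exfalso.
  have hle : forall i, true -> 0 <= - lam i.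
    by move=> i _; rewrite oppr_ge0 leNgt; apply/negP => h; apply: hn; exists i.
  have s0' : \sum_i - lam i = 0 by rewrite sumrN s0 oppr0.
  have := psumr_eq0P hle s0' (i:=i1) isT.
  by move/eqP; rewrite oppr_eq0 (negbTE nz).
set S := \sum_(i | I i) lam i.
have S0 : 0 < S.
  rewrite /S (bigD1 i0) //=; apply: ltr_pwDl => //.
  by apply: sumr_ge0 => i /andP [h _]; apply: ltW.
have S' : \sum_(i | ~~ I i) - lam i = S.
  rewrite sumrN; apply/eqP; rewrite eq_sym -subr_eq0 opprK /S.
  by move: s0; rewrite (bigID I predT) /= => ->.
have C12 : forall j, (\sum_(i | I i) lam i * c i j) / S =
                     (\sum_(i | ~~ I i) - lam i * c i j) / \sum_(i | ~~ I i) - lam i.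
  move=> j; rewrite S'; congr (_ / _).
  rewrite [in RHS](eq_bigr (fun i => - (lam i * c i j))); last by move=> i _; ring.
  rewrite sumrN; apply/eqP; rewrite -subr_eq0 opprK.
  by move: (sc j); rewrite (bigID I predT) /= => ->.
exists (fun j => (\sum_(i | I i) lam i * c i j) / S).
move=> l hl a Pa.
pose il := Ordinal hl.
case: (boolP (I il)) => hI.
  have -> : D n (fun j => (\sum_(i | I i) lam i * c i j) / S) a =
            D n (fun j => (\sum_(i | ~~ I i) - lam i * c i j) / \sum_(i | ~~ I i) - lam i) a.
    by rewrite /D; apply: eq_bigr => j _; rewrite C12.
  apply: CL.
  - by move=> i hi; rewrite oppr_ge0 leNgt.
  - by rewrite S'.
  - move=> i hi; apply: (Hc i l hl) => //; apply/eqP => e.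
    by move: hi; rewrite (_ : i = il) ?hI //; apply: val_inj.
apply: CL.
- by move=> i hi; apply: ltW.
- exact: S0.
- move=> i hi; apply: (Hc i l hl) => //; apply/eqP => e.
  by move: hI; rewrite (_ : il = i) ?hi //; apply: val_inj.
Qed.

Lemma sum_ind m (i : nat) : \sum_(j < m) ((i == j :> nat)%:R : R) = (i < m)%:R.
Proof.
case: (ltnP i m) => h.
  rewrite (bigD1 (Ordinal h)) //= eqxx big1 ?addr0 // => j hj.
  case: eqP => // e; move: hj; rewrite (_ : j = Ordinal h) ?eqxx //.
  by apply: val_inj.
rewrite big1 // => j _; case: eqP => // e.
by move: (ltn_ord j); rewrite -e ltnNge h.
Qed.

Lemma sum_sq m (i k : nat) (a b c : R) : i != k ->
  \sum_(j < m) (a * (i == j :> nat)%:R + b * (k == j :> nat)%:R + c) ^+ 2 =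
  (i < m)%:R * (a ^+ 2 + 2 * a * c) + (k < m)%:R * (b ^+ 2 + 2 * b * c) + m%:R * c ^+ 2.
Proof.
move=> ik.
rewrite (eq_bigr (fun j : 'I_m => ((i == j :> nat)%:R * (a ^+ 2 + 2 * a * c) +
   (k == j :> nat)%:R * (b ^+ 2 + 2 * b * c)) + c ^+ 2)); last first.
  move=> j _; case: (i == j :> nat) / eqP => e1; case: (k == j :> nat) / eqP => e2 /=;
    rewrite ?mulr1 ?mulr0 ?add0r ?addr0 ?mul0r; try ring.
  by exfalso; move/eqP: ik; apply; rewrite e1 e2.
rewrite !big_split /=; congr (_ + _).
  by rewrite -!mulr_suml !sum_ind.
by rewrite sumr_const card_ord mulr_natl.
Qed.

Definition Mr (m : nat) : R := m%:R.
Definition rr m : R := Num.sqrt ((Mr m + 1)^-1).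
Definition tt m : R := Num.sqrt (Mr m / (Mr m - 1)).
Definition gam m := (1 - rr m) / Mr m.
Definition gg m (l : nat) : R := if (l < m)%nat then gam m else rr m.
Definition qq m (l : nat) : Rn m := fun j => tt m * ((l == j :> nat)%:R - gg m l).
Definition cen m (k : nat) : Rn m := fun j => - (tt m / Mr m) * ((k == j :> nat)%:R - gg m k).

Lemma Mgt1 m : (1 < m)%nat -> 1 < Mr m.
Proof. by move=> h; rewrite /Mr ltr1n. Qed.

Lemma rr2 m : (1 < m)%nat -> rr m ^+ 2 = (Mr m + 1)^-1.
Proof.
move=> h; have := @Mgt1 m h => h1.
by rewrite /rr sqr_sqrtr // invr_ge0; lra.
Qed.

Lemma tt2 m : (1 < m)%nat -> tt m ^+ 2 = Mr m / (Mr m - 1).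
Proof.
move=> h; have := @Mgt1 m h => h1.
rewrite /tt sqr_sqrtr // divr_ge0 //; lra.
Qed.

Lemma cen_ok m (i k : nat) : (1 < m)%nat -> (i <= m)%nat -> (k <= m)%nat -> i != k ->
  D m (cen m k) (qq m i) <= 1.
Proof.
move=> hm hi hk ik.
have h1 := @Mgt1 m hm.
have M0 : Mr m != 0 by apply/eqP; lra.
have M1 : Mr m - 1 != 0 by apply/eqP; lra.
have M2 : Mr m + 1 != 0 by apply/eqP; lra.
rewrite /D (eq_bigr (fun j : 'I_m => ((- tt m) * (i == j :> nat)%:R + (- (tt m / Mr m)) * (k == j :> nat)%:R
   + (tt m * gg m i + (tt m / Mr m) * gg m k)) ^+ 2)); last by move=> j _; rewrite /cen /qq; ring.
rewrite sum_sq // -/(Mr m).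
rewrite /gg /gam.
have hT := @tt2 m hm; have hr := @rr2 m hm.
move: (tt m) (rr m) (Mr m) hT hr h1 M0 M1 M2 => T r M hT hr h1 M0 M1 M2.
rewrite le_eqVlt; apply/orP; left; apply/eqP.
case: (ltnP i m) => hi'; case: (ltnP k m) => hk' /=.
- transitivity (T ^+ 2 * (1 + 1 / M ^+ 2 + (M + 1) ^+ 2 / M ^+ 3 * (r ^+ 2 - 1))).
    by field.
  by rewrite hT hr; field; rewrite ?M0 ?M1 ?M2.
- transitivity (T ^+ 2 * ((M - 1) / M)); first by field.
  by rewrite hT; field; rewrite ?M0 ?M1 ?M2.
- transitivity (T ^+ 2 * ((M - 1) / M ^+ 3 + (M ^+ 2 - 1) ^+ 2 / M ^+ 3 * r ^+ 2)).
    by field.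
  by rewrite hT hr; field; rewrite ?M0 ?M1 ?M2.
- exfalso; move/eqP: ik; apply; apply/eqP; rewrite eqn_leq.
  by rewrite (leq_trans hi hk') (leq_trans hk hi').
Qed.

Lemma no_center m (c : Rn m) : (1 < m)%nat ->
  ~ (forall l, (l < m.+1)%nat -> D m c (qq m l) <= 1).
Proof.
move=> hm H.
have h1 := @Mgt1 m hm.
have M0 : Mr m != 0 by apply/eqP; lra.
have M1 : Mr m - 1 != 0 by apply/eqP; lra.
have M2 : Mr m + 1 != 0 by apply/eqP; lra.
have hT := @tt2 m hm; have hr := @rr2 m hm.
have S1 : \sum_(l < m.+1) D m c (qq m l) <= (m.+1)%:R.
  apply: (@le_trans _ _ (\sum_(l < m.+1) (1:R))).
    by apply: ler_sum => l _; exact: H _ (ltn_ord l).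
  by rewrite sumr_const card_ord.
have S2 : Mr m * tt m ^+ 2 <= \sum_(l < m.+1) D m c (qq m l).
  rewrite /D exchange_big /=.
  apply: (@le_trans _ _ (\sum_(j < m) tt m ^+ 2)).
    by rewrite sumr_const card_ord /Mr mulr_natl.
  apply: ler_sum => j _; rewrite big_ord_recr /=.
  rewrite (eq_bigr (fun l : 'I_m => ((- tt m) * (j == l :> nat)%:R + 0 * (m == l :> nat)%:R
     + (c j + tt m * gam m)) ^+ 2)); last first.
    by move=> l _; rewrite /qq /gg /= (ltn_ord l) eq_sym; ring.
  rewrite sum_sq; last by rewrite ltn_eqF.
  rewrite (ltn_ord j) ltnn /qq /gg ltnn.
  have -> : (m == j :> nat) = false by apply/negbTE; rewrite neq_ltn ltn_ord orbT.
  rewrite /gam -[m%:R]/(Mr m).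
  move: (tt m) (rr m) (Mr m) (c j) hT hr h1 M0 M1 M2 => T r M x hT hr h1 M0 M1 M2 /=.

  have E : 1 * ((- T) ^+ 2 + 2 * - T * (x + T * ((1 - r) / M))) +
  0 * (0 ^+ 2 + 2 * 0 * (x + T * ((1 - r) / M))) +
  M * (x + T * ((1 - r) / M)) ^+ 2 + (x - T * (0 - r)) ^+ 2 = (M + 1) * x ^+ 2 + T ^+ 2 * (1 + r ^+ 2 + (r ^+ 2 - 1) / M).
    by field; rewrite ?M0.
  rewrite E hr.
  have -> : 1 + (M + 1)^-1 + ((M + 1)^-1 - 1) / M = 1 by field; rewrite ?M0 ?M2.
  have : 0 <= (M + 1) * x ^+ 2 by apply: mulr_ge0; [lra | exact: sqr_ge0].
  lra.
have := le_trans S2 S1; rewrite hT mulrA ler_pdivrMr; last by lra.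
rewrite /Mr -/(Mr m) => h.
have hh : (m.+1)%:R = Mr m + 1 by rewrite /Mr -addn1 natrD.
rewrite hh in h; nra.
Qed.

Lemma DE n x y : euclid_dist n x y = sqrt (D n x y).
Proof. rewrite /euclid_dist /D; congr sqrt; apply: eq_bigr => i _; by rewrite expr2. Qed.

Lemma D_ge0 n x y : 0 <= D n x y.
Proof. by apply: sumr_ge0 => i _; apply: sqr_ge0. Qed.

Lemma Rgt1_iff n x y : R_gt1 n x y <-> 1 < D n x y.
Proof.
rewrite /R_gt1 DE; split.
- move=> h; apply/RltP; apply: sqrt_lt_0_alt; rewrite sqrt_1; exact: h.
- move/RltP => h; rewrite -sqrt_1; apply: sqrt_lt_1_alt; split => //.
  by apply: Rle_0_1.
Qed.

Lemma far n (x y : Rn n) : (1 <= n)%nat -> exists z, R_gt1 n x z /\ R_gt1 n z y.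
Proof.
case: n x y => [//|n] x y _.
exists (fun i => `|x i| + `|y i| + 2); split; apply/Rgt1_iff; rewrite /D big_ord_recl /=.
- have : 0 <= \sum_(i < n) (x (lift ord0 i) - (`|x (lift ord0 i)| + `|y (lift ord0 i)| + 2)) ^+ 2.
    by apply: sumr_ge0 => i _; apply: sqr_ge0.
  have := ler_norm (x ord0); have := normr_ge0 (y ord0).
  set a := x ord0; set b := `|a|; set c := `|y ord0|. nra.
- have : 0 <= \sum_(i < n) ((`|x (lift ord0 i)| + `|y (lift ord0 i)| + 2) - y (lift ord0 i)) ^+ 2.
    by apply: sumr_ge0 => i _; apply: sqr_ge0.
  have := ler_norm (y ord0); have := normr_ge0 (x ord0).
  set a := y ord0; set b := `|a|; set c := `|x ord0|. nra.
Qed.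

Definition Neg a := Imp a Bot.
Definition Or a b := Imp (Neg a) b.
Definition And a b := Neg (Imp a (Neg b)).
Definition Top := Neg Bot.
Definition Box a := Neg (Dia (Neg a)).
Definition Ex a := Dia (Dia a).
Fixpoint bigOr (s : seq nat) : Defs.form := if s is p :: s' then Or (Var p) (bigOr s') else Bot.
Fixpoint bigAnd (s : seq Defs.form) : Defs.form := if s is a :: s' then And a (bigAnd s') else Top.
Definition ballf s := Ex (Box (Neg (bigOr s))).
Definition others k i := [seq l <- iota 0 k | l != i].
Definition phi k := Imp (bigAnd [seq ballf (others k i) | i <- iota 0 k]) (ballf (iota 0 k)).

Lemma sat_bigOr X (Rel : X -> X -> Prop) V x s :
  sat Rel V x (bigOr s) <-> exists p, p \in s /\ V p x.
Proof.
elim: s => [|p s IH] /=; first by split => // [[p []]].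
split.
- move=> h; case: (classic (V p x)) => hp.
    by exists p; rewrite inE eqxx.
  have [q [qs Vq]] := IH.1 (h hp).
  by exists q; rewrite inE qs orbT.
- move=> [q [qs Vq]] np; apply/IH.
  move: qs; rewrite inE => /orP [/eqP e|qs]; last by exists q.
  by exfalso; apply: np; rewrite -e.
Qed.

Lemma sat_bigAnd X (Rel : X -> X -> Prop) V x (f : nat -> Defs.form) s :
  sat Rel V x (bigAnd (map f s)) <-> forall i, i \in s -> sat Rel V x (f i).
Proof.
elim: s => [|p s IH] /=; first by split => // _ h.
split.
- move=> h i; rewrite inE => /orP [/eqP ->|hs].
    by apply: NNPP => np; apply: h => a _; apply: np.
  apply: IH.1 hs => //; apply: NNPP => np; apply: h => a; apply: np.
- move=> h h2; apply: (h2 (h p _)); first by rewrite inE eqxx.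
  by apply/IH => i hs; apply: h; rewrite inE hs orbT.
Qed.

Lemma sat_ballf X (Rel : X -> X -> Prop) V x s :
  sat Rel V x (ballf s) <-> exists z y, Rel x z /\ Rel z y /\
     forall w, Rel y w -> forall p, p \in s -> ~ V p w.
Proof.
rewrite /ballf /Ex /Box /Neg /=; split.
- move=> [z [xz [y [zy hy]]]]; exists z, y; do 2 split => //.
  move=> w yw p ps Vp; apply: hy; exists w; split => // h; apply: h.
  by apply/sat_bigOr; exists p.
- move=> [z [y [xz [zy hy]]]]; exists z; split => //; exists y; split => //.
  move=> [w [yw hw]]; apply: hw => /sat_bigOr [p [ps Vp]].
  exact: hy w yw p ps Vp.
Qed.

Lemma valid_phi n k : (1 <= n)%nat -> (n.+1 < k)%nat -> Log_gt1 n (phi k).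
Proof.
move=> hn hk V x /= /sat_bigAnd Hyp; apply/sat_ballf.
have Hc : forall i : 'I_k, exists c : Rn n, forall l, (l < k)%nat -> l != i ->
    forall a, V l a -> D n c a <= 1.
  move=> i; have := Hyp i; rewrite mem_iota add0n ltn_ord => /(_ isT) /sat_ballf.
  move=> [z [y [_ [_ hy]]]]; exists y => l hl li a Va.
  rewrite leNgt; apply/negP => /Rgt1_iff h.
  by apply: (hy a h l _ Va); rewrite mem_filter li mem_iota add0n hl.
pose cf := fun i => proj1_sig (constructive_indefinite_description _ (Hc i)).
have Hcf : forall (i : 'I_k) (l : nat), (l < k)%nat -> l != i -> forall a, V l a -> D n (cf i) a <= 1.
  by move=> i; exact: (proj2_sig (constructive_indefinite_description _ (Hc i))).
have [c0 Hc0] := @helly n k cf V hk Hcf.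
have [z [xz zc]] := @far n x c0 hn.
exists z, c0; do 2 split => //.
move=> w /Rgt1_iff cw p; rewrite mem_iota add0n => pk Vp.
by have := Hc0 p pk w Vp; rewrite leNgt cw.
Qed.

Lemma invalid_phi m : (1 < m)%nat -> ~ Log_gt1 m (phi m.+1).
Proof.
move=> hm Hv.
have hm1 : (1 <= m)%nat by apply: ltnW.
pose V := fun l (a : Rn m) => (l < m.+1)%nat /\ a = qq m l.
have H : sat (R_gt1 m) V (qq m 0) (bigAnd [seq ballf (others m.+1 i) | i <- iota 0 m.+1]) -> sat (R_gt1 m) V (qq m 0) (ballf (iota 0 m.+1)) := Hv V (qq m 0).
have Hyp : sat (R_gt1 m) V (qq m 0) (bigAnd [seq ballf (others m.+1 i) | i <- iota 0 m.+1]).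
  apply/sat_bigAnd => i; rewrite mem_iota add0n => hi; apply/sat_ballf.
  have [z [xz zc]] := @far m (qq m 0) (cen m i) hm1.
  exists z, (cen m i); do 2 split => //.
  move=> w /Rgt1_iff cw p; rewrite mem_filter mem_iota add0n => /andP [pi pk] [_ ew].
  have := @cen_ok m p i hm pk hi pi.
  by rewrite -ew leNgt cw.
have := H Hyp; move/sat_ballf => [z [y [_ [_ hy]]]].
apply: (@no_center m y hm) => l hl; rewrite leNgt; apply/negP => /Rgt1_iff h.
by apply: (hy _ h l); [rewrite mem_iota add0n hl | split].
Qed.

Theorem theorem3p3 :
  (forall n m : nat, (1 <= n)%coq_nat -> (n < m)%coq_nat ->
     ~ (forall phi : Defs.form, Log_gt1 n phi -> Log_gt1 m phi)) /\
  (forall n m : nat, (1 <= n)%coq_nat -> (1 <= m)%coq_nat -> n <> m ->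
     ~ (forall phi : Defs.form, Log_gt1 n phi <-> Log_gt1 m phi)).
Proof.
have P1 : forall n m : nat, (1 <= n)%coq_nat -> (n < m)%coq_nat ->
     ~ (forall phi : Defs.form, Log_gt1 n phi -> Log_gt1 m phi).
  move=> n m /ssrnat.leP hn /ssrnat.ltP hnm H.
  have hm : (1 < m)%nat by apply: leq_ltn_trans hn hnm.
  apply: (@invalid_phi m hm); apply: H; apply: valid_phi => //.
split => // n m hn hm nm H.
case: (ltngtP n m) => h.
- by apply: (P1 n m hn (ssrnat.ltP h)) => f; move/H.
- by apply: (P1 m n hm (ssrnat.ltP h)) => f; move/H.
- by apply: nm.
Qed.
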